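(* For every $x\in\mathbb{R}$ there exists $k\in\{0,1,2,3\}$ such that $|\mathrm{Re}(H^{(k)}(x))|\ge 1/4$, where $H^{(k)}$ denotes the $k$-th derivative of $H$.
   Context: Rudin–Shapiro polynomials: $P_0(z)=Q_0(z)=1$ and for $s\ge0$, $P_{s+1}(z)=P_s(z)+z^{2^s}Q_s(z)$, $Q_{s+1}(z)=P_s(z)-z^{2^s}Q_s(z)$. Let $t$ be an odd positive integer and $T:=2^{t+10}$. For $x\in\mathbb{R}$ define $\alpha(x):=2^{-(t+1)/2}P_t(e^{ix/T})$, $\beta(x):=2^{-(t+1)/2}Q_t(e^{ix/T})$, and $H(x):=e^{ix}\alpha(x)+e^{2ix}\beta(x)$. *)

(* Defs.v *)
From Stdlib Require Import Reals.
From Coquelicot Require Import Coquelicot.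
Open Scope R_scope.

Fixpoint Cpow (z : C) (n : nat) : C :=
  match n with O => RtoC 1 | S m => Cmult z (Cpow z m) end.

Definition cis (x : R) : C := (cos x, sin x).

(* Rudin--Shapiro pair (P_s(z), Q_s(z)):
   P_0 = Q_0 = 1, P_{s+1} = P_s + z^{2^s} Q_s, Q_{s+1} = P_s - z^{2^s} Q_s *)
Fixpoint RS (s : nat) (z : C) : C * C :=
  match s with
  | O => (RtoC 1, RtoC 1)
  | S s' => let (p, q) := RS s' z in
            (Cplus p (Cmult (Cpow z (2 ^ s')) q),
             Cminus p (Cmult (Cpow z (2 ^ s')) q))
  end.
Definition RS_P (s : nat) (z : C) : C := fst (RS s z).
Definition RS_Q (s : nat) (z : C) : C := snd (RS s z).

Definition Tt (t : nat) : R := 2 ^ (t + 10).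

Definition nrm (t : nat) : R := Rpower 2 (- (INR t + 1) / 2).

Definition alpha (t : nat) (x : R) : C := Cmult (RtoC (nrm t)) (RS_P t (cis (x / Tt t))).
Definition beta  (t : nat) (x : R) : C := Cmult (RtoC (nrm t)) (RS_Q t (cis (x / Tt t))).

Definition H (t : nat) (x : R) : C :=
  Cplus (Cmult (cis x) (alpha t x)) (Cmult (cis (2 * x)) (beta t x)).

Definition Cderive_n (f : R -> C) (k : nat) (x : R) : C :=
  (Derive_n (fun y => Re (f y)) k x, Derive_n (fun y => Im (f y)) k x).

(* Main.v *)
Require Import Defs.
From Stdlib Require Import Reals Arith Lra Lia Psatz.
From Coquelicot Require Import Coquelicot.
Open Scope R_scope.

Ltac Rring := match goal with |- ?a = ?b => change (@eq R a b) end; ring.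

Lemma der_plus (f g : R -> R) x a b : is_derive f x a -> is_derive g x b ->
  is_derive (fun y => f y + g y) x (a + b).
Proof. intros; now apply (is_derive_plus f g). Qed.
Lemma der_minus (f g : R -> R) x a b : is_derive f x a -> is_derive g x b ->
  is_derive (fun y => f y - g y) x (a - b).
Proof. intros; now apply (is_derive_minus f g). Qed.
Lemma der_mult (f g : R -> R) x a b : is_derive f x a -> is_derive g x b ->
  is_derive (fun y => f y * g y) x (a * g x + f x * b).
Proof. intros; apply (is_derive_mult f g); auto. intros; apply Rmult_comm. Qed.
Lemma der_ext (f g : R -> R) x a b : (forall y, f y = g y) -> a = b -> is_derive f x a -> is_derive g x b.
Proof. intros H1 H2 H3; subst; now apply (is_derive_ext f g). Qed.

Definition Cder (f g : R -> C) := forall x,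
  is_derive (fun y => fst (f y)) x (fst (g x)) /\ is_derive (fun y => snd (f y)) x (snd (g x)).

Lemma Cder_ext f g f2 g2 : (forall x, f x = f2 x) -> (forall x, g x = g2 x) -> Cder f g -> Cder f2 g2.
Proof.
  intros E1 E2 D x; destruct (D x) as [D1 D2]; split.
  { eapply der_ext; [| | exact D1]; intros; simpl; rewrite ?E1, ?E2; auto. }
  { eapply der_ext; [| | exact D2]; intros; simpl; rewrite ?E1, ?E2; auto. }
Qed.

Lemma Cder_plus f f' g g' : Cder f f' -> Cder g g' ->
  Cder (fun x => Cplus (f x) (g x)) (fun x => Cplus (f' x) (g' x)).
Proof. intros A B x; destruct (A x), (B x); split; simpl; now apply der_plus. Qed.
Lemma der_opp (f : R -> R) x a : is_derive f x a -> is_derive (fun y => - f y) x (- a).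
Proof. intros; now apply (is_derive_opp f). Qed.
Lemma Cder_minus f f' g g' : Cder f f' -> Cder g g' ->
  Cder (fun x => Cminus (f x) (g x)) (fun x => Cminus (f' x) (g' x)).
Proof. intros A B x; destruct (A x), (B x); split; simpl; apply der_plus; auto; now apply der_opp. Qed.
Lemma Cder_mult f f' g g' : Cder f f' -> Cder g g' ->
  Cder (fun x => Cmult (f x) (g x)) (fun x => Cplus (Cmult (f' x) (g x)) (Cmult (f x) (g' x))).
Proof.
  intros A B x; destruct (A x), (B x); split; simpl.
  { eapply der_ext. 3: { apply der_minus; [apply (der_mult (fun y => fst (f y)) (fun y => fst (g y))) | apply (der_mult (fun y => snd (f y)) (fun y => snd (g y)))]; eassumption. }
    intros; reflexivity. Rring. }
  { eapply der_ext. 3: { apply der_plus; [apply (der_mult (fun y => fst (f y)) (fun y => snd (g y))) | apply (der_mult (fun y => snd (f y)) (fun y => fst (g y)))]; eassumption. }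
    intros; reflexivity. Rring. }
Qed.
Lemma Cder_const (c : C) : Cder (fun _ => c) (fun _ => RtoC 0).
Proof. intros x; split; simpl; apply (is_derive_const (V := R_NormedModule)). Qed.
Lemma Cder_cis (c : R) : Cder (fun x => cis (c * x)) (fun x => Cmult (Cmult Ci (RtoC c)) (cis (c * x))).
Proof.
  intros x; unfold cis; split; simpl; auto_derive; auto; ring.
Qed.
Lemma Cder_scale f g (u : R) : Cder f g -> Cder (fun x => f (x * u)) (fun x => Cmult (RtoC u) (g (x * u))).
Proof.
  intros A x; destruct (A (x * u)) as [A1 A2].
  assert (Du : is_derive (fun y : R => y * u) x u) by (auto_derive; auto; Rring).
  split.
  { eapply der_ext. 3: { apply (is_derive_comp (fun y => fst (f y)) (fun y => y * u)); [exact A1|exact Du]. }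
    intros; reflexivity. unfold scal; simpl; unfold mult; simpl; Rring. }
  { eapply der_ext. 3: { apply (is_derive_comp (fun y => snd (f y)) (fun y => y * u)); [exact A2|exact Du]. }
    intros; reflexivity. unfold scal; simpl; unfold mult; simpl; Rring. }
Qed.

Lemma Derive_chain (f f1 : R -> R) : (forall x, is_derive f x (f1 x)) -> forall x, Derive f x = f1 x.
Proof. intros; now apply is_derive_unique. Qed.

Lemma Cderive_chain f0 f1 f2 f3 : Cder f0 f1 -> Cder f1 f2 -> Cder f2 f3 -> forall x,
  Cderive_n f0 0 x = f0 x /\ Cderive_n f0 1 x = f1 x /\ Cderive_n f0 2 x = f2 x /\ Cderive_n f0 3 x = f3 x.
Proof.
  intros A B D x; unfold Cderive_n.
  assert (E1 : forall y, Derive_n (fun y => fst (f0 y)) 1 y = fst (f1 y)) by (intros; simpl; apply is_derive_unique; apply A).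
  assert (E1' : forall y, Derive_n (fun y => snd (f0 y)) 1 y = snd (f1 y)) by (intros; simpl; apply is_derive_unique; apply A).
  assert (E2 : forall y, Derive_n (fun y => fst (f0 y)) 2 y = fst (f2 y)).
  { intros; change (Derive (Derive_n (fun y => fst (f0 y)) 1) y = fst (f2 y)).
    rewrite (Derive_ext _ _ _ E1). apply is_derive_unique; apply B. }
  assert (E2' : forall y, Derive_n (fun y => snd (f0 y)) 2 y = snd (f2 y)).
  { intros; change (Derive (Derive_n (fun y => snd (f0 y)) 1) y = snd (f2 y)).
    rewrite (Derive_ext _ _ _ E1'). apply is_derive_unique; apply B. }
  assert (E3 : forall y, Derive_n (fun y => fst (f0 y)) 3 y = fst (f3 y)).
  { intros; change (Derive (Derive_n (fun y => fst (f0 y)) 2) y = fst (f3 y)).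
    rewrite (Derive_ext _ _ _ E2). apply is_derive_unique; apply D. }
  assert (E3' : forall y, Derive_n (fun y => snd (f0 y)) 3 y = snd (f3 y)).
  { intros; change (Derive (Derive_n (fun y => snd (f0 y)) 2) y = snd (f3 y)).
    rewrite (Derive_ext _ _ _ E2'). apply is_derive_unique; apply D. }
  rewrite E1, E1', E2, E2', E3, E3'. simpl. destruct (f0 x), (f1 x), (f2 x), (f3 x); repeat split.
Qed.

Ltac Ceq := apply injective_projections; unfold Cplus, Cmult, Cminus, Copp, RtoC, Ci; simpl; Rring.

Lemma Cder_lin (k : C) f f' : Cder f f' -> Cder (fun x => Cmult k (f x)) (fun x => Cmult k (f' x)).
Proof.
  intro A. eapply Cder_ext; [intros; reflexivity| |apply Cder_mult; [apply Cder_const|exact A]].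
  intros; simpl; Ceq.
Qed.

Definition Bf (c : R) (q : nat -> C) (m : nat) : C :=
  match m with
  | O => q 0%nat
  | 1%nat => Cplus (q 1%nat) (Cmult (RtoC c) (q 0%nat))
  | 2%nat => Cplus (q 2%nat) (Cplus (Cmult (RtoC (2*c)) (q 1%nat)) (Cmult (RtoC (c^2)) (q 0%nat)))
  | _ => Cplus (q 3%nat) (Cplus (Cmult (RtoC (3*c)) (q 2%nat)) (Cplus (Cmult (RtoC (3*c^2)) (q 1%nat)) (Cmult (RtoC (c^3)) (q 0%nat))))
  end.

Definition e0 (m : nat) : C := match m with O => RtoC 1 | _ => RtoC 0 end.

Fixpoint RSD (s : nat) (th : R) : (nat -> C) * (nat -> C) :=
  match s with
  | O => (e0, e0)
  | S s' => let pq := RSD s' th in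
     (fun m => Cplus (fst pq m) (Cmult (cis (2^s' * th)) (Bf (2^s') (snd pq) m)),
      fun m => Cminus (fst pq m) (Cmult (cis (2^s' * th)) (Bf (2^s') (snd pq) m)))
  end.
Definition RP s m th := fst (RSD s th) m.
Definition RQ s m th := snd (RSD s th) m.

Lemma RP_S s m th : RP (S s) m th = Cplus (RP s m th) (Cmult (cis (2^s * th)) (Bf (2^s) (fun j => RQ s j th) m)).
Proof. reflexivity. Qed.
Lemma RQ_S s m th : RQ (S s) m th = Cminus (RP s m th) (Cmult (cis (2^s * th)) (Bf (2^s) (fun j => RQ s j th) m)).
Proof. reflexivity. Qed.

Lemma Bf_der (c : R) (q : nat -> R -> C) m : (m <= 2)%nat ->
  (forall j, (j <= 2)%nat -> Cder (q j) (fun th => Cmult Ci (q (S j) th))) ->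
  Cder (fun th => Bf c (fun j => q j th) m) (fun th => Bf c (fun j => Cmult Ci (q (S j) th)) m).
Proof.
  intros Hm D.
  destruct m as [|[|[|m]]]; simpl.
  { apply D; lia. }
  { apply Cder_plus; [apply D; lia|apply Cder_lin; apply D; lia]. }
  { apply Cder_plus; [apply D; lia|apply Cder_plus; apply Cder_lin; apply D; lia]. }
  { lia. }
Qed.

Lemma RS_der s : forall m, (m <= 2)%nat ->
  Cder (RP s m) (fun th => Cmult Ci (RP s (S m) th)) /\ Cder (RQ s m) (fun th => Cmult Ci (RQ s (S m) th)).
Proof.
  induction s as [|s IH]; intros m Hm.
  { split; (eapply Cder_ext; [| |apply (Cder_const (e0 m))]); intros; unfold RP, RQ; simpl; try reflexivity;
    destruct m; Ceq. }
  assert (DQ : forall j, (j <= 2)%nat -> Cder (RQ s j) (fun th => Cmult Ci (RQ s (S j) th))) by (intros; apply IH; auto).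
  assert (DB := Bf_der (2^s) (RQ s) m Hm DQ).
  assert (DW : Cder (fun th => Cmult (cis (2^s*th)) (Bf (2^s) (fun j => RQ s j th) m))
                    (fun th => Cmult Ci (Cmult (cis (2^s*th)) (Bf (2^s) (fun j => RQ s j th) (S m))))).
  { eapply Cder_ext; [intros; reflexivity| |apply Cder_mult; [apply Cder_cis|exact DB]].
    intros th. destruct m as [|[|[|m]]]; simpl; [Ceq|Ceq|Ceq|lia]. }
  destruct (IH m Hm) as [DP _].
  split.
  { eapply Cder_ext; [intros; symmetry; apply RP_S| |apply Cder_plus; [exact DP|exact DW]].
    intros; rewrite RP_S; Ceq. }
  { eapply Cder_ext; [intros; symmetry; apply RQ_S| |apply Cder_minus; [exact DP|exact DW]].
    intros; rewrite RQ_S; Ceq. }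
Qed.

Lemma Cmod2 z : Cmod z ^ 2 = fst z ^ 2 + snd z ^ 2.
Proof. unfold Cmod. rewrite pow2_sqrt; auto. nra. Qed.

Lemma Cmod_cis a : Cmod (cis a) = 1.
Proof. unfold Cmod, cis; simpl. pose proof (sin2_cos2 a) as E. unfold Rsqr in E. replace (cos a * (cos a * 1) + sin a * (sin a * 1)) with 1 by lra. apply sqrt_1. Qed.

Lemma Cmod_RtoC_mult k z : 0 <= k -> Cmod (Cmult (RtoC k) z) = k * Cmod z.
Proof. intros; rewrite Cmod_mult, Cmod_R, Rabs_pos_eq; auto. Qed.

Lemma Bf_bound c rho q m : (m <= 3)%nat -> 0 <= c -> 0 <= rho ->
  (forall l, (l <= 3)%nat -> Cmod (q l) <= rho * c ^ l) ->
  Cmod (Bf c q m) <= Cmod (q m) + (2 ^ m - 1) * rho * c ^ m.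
Proof.
  intros Hm Hc Hr Hq.
  assert (Q0 := Hq 0%nat ltac:(lia)); assert (Q1 := Hq 1%nat ltac:(lia));
  assert (Q2 := Hq 2%nat ltac:(lia)); assert (Q3 := Hq 3%nat ltac:(lia)); simpl in *.
  destruct m as [|[|[|[|m]]]]; simpl.
  { lra. }
  { eapply Rle_trans; [apply Cmod_triangle|]. rewrite Cmod_RtoC_mult by lra. nra. }
  { eapply Rle_trans; [apply Cmod_triangle|]. apply Rplus_le_compat_l.
    eapply Rle_trans; [apply Cmod_triangle|]. rewrite !Cmod_RtoC_mult by nra. nra. }
  { eapply Rle_trans; [apply Cmod_triangle|]. apply Rplus_le_compat_l.
    eapply Rle_trans; [apply Cmod_triangle|].
    eapply Rle_trans; [apply Rplus_le_compat_l; apply Cmod_triangle|].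
    rewrite !Cmod_RtoC_mult by nra.
    assert (0 <= c * c) by nra.
    assert (c * c * Cmod (q 1%nat) <= c * c * (rho * (c * 1))) by (apply Rmult_le_compat_l; lra).
    assert (c * c * c * Cmod (q 0%nat) <= c * c * c * (rho * 1)) by (apply Rmult_le_compat_l; nra).
    nra. }
  { lia. }
Qed.

Lemma key_ineq X Y K r M : 0 <= X -> 0 <= Y -> 0 <= K -> 0 <= r -> X^2 + Y^2 <= K^2 ->
  r <= (M - 1) * K -> 1 <= M -> X^2 + (Y + r)^2 <= M^2 * K^2.
Proof.
  intros. assert (Y <= K) by nra. assert (r * r <= (M-1)*K*((M-1)*K)) by (apply Rmult_le_compat; lra).
  assert (2 * Y * r <= 2 * K * ((M-1)*K)) by (apply Rmult_le_compat; nra). nra.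
Qed.

Definition SS s m th := Cmod (RP s m th) ^ 2 + Cmod (RQ s m th) ^ 2.

Lemma paral p w : Cmod (Cplus p w) ^ 2 + Cmod (Cminus p w) ^ 2 = 2 * (Cmod p ^ 2 + Cmod w ^ 2).
Proof. rewrite !Cmod2. unfold Cplus, Cminus, Copp; simpl. Rring. Qed.

Lemma SS_S s m th : SS (S s) m th = 2 * (Cmod (RP s m th) ^ 2 + Cmod (Bf (2^s) (fun j => RQ s j th) m) ^ 2).
Proof. unfold SS. rewrite RP_S, RQ_S, paral, Cmod_mult, Cmod_cis, Rmult_1_l. reflexivity. Qed.

Lemma sq_le a b : 0 <= a -> 0 <= b -> a ^ 2 <= b ^ 2 -> a <= b.
Proof. intros; nra. Qed.

Lemma RS_bound s th : SS s 0 th = 2 ^ (s + 1) /\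
  forall m, (m <= 3)%nat -> SS s m th <= 2 ^ (s + 1) * ((2 ^ s) ^ m) ^ 2.
Proof.
  induction s as [|s [IH0 IH]].
  { split. { unfold SS, RP, RQ; simpl; rewrite Cmod_R, Rabs_R1; ring. }
    intros m Hm; unfold SS, RP, RQ; simpl. destruct m; simpl; rewrite ?Cmod_R, ?Rabs_R1, ?Rabs_R0, ?pow1; lra. }
  set (rho := sqrt (2 ^ (s + 1))). set (c := 2 ^ s).
  assert (Hc : 0 < c) by (apply pow_lt; lra).
  assert (Hrho2 : rho ^ 2 = 2 ^ (s + 1)) by (unfold rho; rewrite pow2_sqrt; auto; apply pow_le; lra).
  assert (Hrho : 0 <= rho) by apply sqrt_pos.
  assert (HQ : forall l, (l <= 3)%nat -> Cmod (RQ s l th) <= rho * c ^ l).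
  { intros l Hl. apply sq_le. apply Cmod_ge_0. apply Rmult_le_pos; auto. apply pow_le; lra.
    specialize (IH l Hl). unfold SS in IH. assert (0 <= Cmod (RP s l th) ^ 2) by (apply pow2_ge_0).
    rewrite Rpow_mult_distr, Hrho2. fold c in IH. lra. }
  assert (HP : forall l, (l <= 3)%nat -> Cmod (RP s l th) ^ 2 + Cmod (RQ s l th) ^ 2 <= (rho * c ^ l) ^ 2).
  { intros l Hl. rewrite Rpow_mult_distr, Hrho2. apply IH; auto. }
  split.
  { rewrite SS_S. simpl Bf. unfold SS in IH0. replace (S s + 1)%nat with (S (s+1)) by lia.
    change (2 ^ S (s+1)) with (2 * 2^(s+1)). rewrite <- IH0. reflexivity. }
  intros m Hm. rewrite SS_S.
  assert (HB := Bf_bound c rho (fun j => RQ s j th) m Hm ltac:(lra) Hrho HQ). simpl in HB.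
  assert (Hk := key_ineq (Cmod (RP s m th)) (Cmod (RQ s m th)) (rho * c ^ m) ((2 ^ m - 1) * rho * c ^ m) (2 ^ m)
     (Cmod_ge_0 _) (Cmod_ge_0 _) ltac:(apply Rmult_le_pos; auto; apply pow_le; lra)
     ltac:(apply Rmult_le_pos; [apply Rmult_le_pos; auto|apply pow_le; lra]; assert (1 <= 2^m) by (apply pow_R1_Rle; lra); lra)
     (HP m Hm) ltac:(lra) ltac:(apply pow_R1_Rle; lra)).
  assert (Cmod (Bf c (fun j => RQ s j th) m) ^ 2 <= (Cmod (RQ s m th) + (2 ^ m - 1) * rho * c ^ m) ^ 2).
  { apply pow_incr; split; auto; apply Cmod_ge_0. }
  replace (2 ^ (S s + 1) * ((2 ^ S s) ^ m) ^ 2) with (2 * ((2 ^ m) ^ 2 * (rho * c ^ m) ^ 2)).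
  { fold c. lra. }
  rewrite !Rpow_mult_distr, Hrho2. unfold c. rewrite <- !pow_mult, <- !pow_add.
  replace (S s + 1)%nat with (S (s + 1)) by lia. simpl pow at 1. rewrite tech_pow_Rmult. f_equal. lia.
Qed.

Lemma sq_bound x d : 0 <= d -> x ^ 2 <= d ^ 2 -> - d <= x <= d.
Proof. intros; split; nra. Qed.
Lemma sq_le_b x d : - d <= x <= d -> x ^ 2 <= d ^ 2.
Proof. intros; nra. Qed.

Lemma final_arith p q r v a1 a2 a3 b1 b2 b3 c1 c2 c3 d1 d2 d3 :
  p^2 + q^2 + r^2 + v^2 = 1 ->
  a1^2 + c1^2 + b1^2 + d1^2 <= (/1024)^2 ->
  a2^2 + c2^2 + b2^2 + d2^2 <= (/1024)^2 ->
  a3^2 + c3^2 + b3^2 + d3^2 <= (/1024)^2 ->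
  Rabs (p + r) < 1/4 ->
  Rabs (- q - c1 - 2 * v - d1) < 1/4 ->
  Rabs (- (p + 2 * a1 + a2) - (4 * r + 4 * b1 + b2)) < 1/4 ->
  Rabs (q + 3 * c1 + 3 * c2 + c3 + 8 * v + 12 * d1 + 6 * d2 + d3) < 1/4 -> False.
Proof.
  intros E H1 H2 H3 R0 R1 R2 R3.
  apply Rabs_def2 in R0, R1, R2, R3. destruct R0, R1, R2, R3.
  assert (Hd : 0 <= /1024) by lra.
  pose proof (pow2_ge_0 a1); pose proof (pow2_ge_0 a2); pose proof (pow2_ge_0 a3);
  pose proof (pow2_ge_0 b1); pose proof (pow2_ge_0 b2); pose proof (pow2_ge_0 b3);
  pose proof (pow2_ge_0 c1); pose proof (pow2_ge_0 c2); pose proof (pow2_ge_0 c3);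
  pose proof (pow2_ge_0 d1); pose proof (pow2_ge_0 d2); pose proof (pow2_ge_0 d3).
  assert (Ha1 := sq_bound a1 (/1024) Hd ltac:(lra)).
  assert (Ha2 := sq_bound a2 (/1024) Hd ltac:(lra)).
  assert (Hb1 := sq_bound b1 (/1024) Hd ltac:(lra)).
  assert (Hb2 := sq_bound b2 (/1024) Hd ltac:(lra)).
  assert (Hc1 := sq_bound c1 (/1024) Hd ltac:(lra)).
  assert (Hc2 := sq_bound c2 (/1024) Hd ltac:(lra)).
  assert (Hc3 := sq_bound c3 (/1024) Hd ltac:(lra)).
  assert (Hd1 := sq_bound d1 (/1024) Hd ltac:(lra)).
  assert (Hd2 := sq_bound d2 (/1024) Hd ltac:(lra)).
  assert (Hd3 := sq_bound d3 (/1024) Hd ltac:(lra)).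
  assert (Hp := sq_le_b p (1/2) ltac:(lra)).
  assert (Hq := sq_le_b q (1/2) ltac:(lra)).
  assert (Hr := sq_le_b r (1/5) ltac:(lra)).
  assert (Hv := sq_le_b v (1/10) ltac:(lra)).
  lra.
Qed.

Lemma Cpow_cis th n : Cpow (cis th) n = cis (INR n * th).
Proof.
  induction n as [|n IH]; simpl Cpow.
  { unfold cis; simpl. rewrite Rmult_0_l, cos_0, sin_0. reflexivity. }
  rewrite IH, S_INR. unfold cis, Cmult; simpl.
  replace ((INR n + 1) * th) with (th + INR n * th) by ring.
  rewrite cos_plus, sin_plus. f_equal; ring.
Qed.

Lemma RS_RP s th : RS s (cis th) = (RP s 0 th, RQ s 0 th).
Proof.
  induction s as [|s IH]. { reflexivity. }
  simpl RS. rewrite IH, Cpow_cis, pow_INR. simpl INR.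
  rewrite RP_S, RQ_S. reflexivity.
Qed.

Lemma nrm_sq t : nrm t * nrm t * 2 ^ (t + 1) = 1.
Proof.
  unfold nrm. rewrite <- Rpower_plus.
  replace (- (INR t + 1) / 2 + - (INR t + 1) / 2) with (- INR (t + 1)) by (rewrite plus_INR; simpl; field).
  rewrite Rpower_Ropp, Rpower_pow by lra. field. apply pow_nonzero; lra.
Qed.

Lemma nrm_pos t : 0 < nrm t.
Proof. unfold nrm, Rpower. apply exp_pos. Qed.

Section Main.
Variable t : nat.
Let u := / Tt t.
Let N := nrm t.

Definition AA j x := Cmult (RtoC (N * u ^ j)) (RP t j (x * u)).
Definition BB j x := Cmult (RtoC (N * u ^ j)) (RQ t j (x * u)).

Lemma AA_der j : (j <= 2)%nat -> Cder (AA j) (fun x => Cmult Ci (AA (S j) x)) /\ Cder (BB j) (fun x => Cmult Ci (BB (S j) x)).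
Proof.
  intros Hj; destruct (RS_der t j Hj) as [D1 D2]; split.
  { eapply Cder_ext; [intros; reflexivity| |apply Cder_lin; apply Cder_scale; exact D1].
    intros; unfold AA; simpl pow; Ceq. }
  { eapply Cder_ext; [intros; reflexivity| |apply Cder_lin; apply Cder_scale; exact D2].
    intros; unfold BB; simpl pow; Ceq. }
Qed.

Definition E1 x := cis (1 * x).
Definition E2 x := cis (2 * x).
Definition HH (F G : R -> C) x := Cplus (Cmult (E1 x) (F x)) (Cmult (E2 x) (G x)).

Lemma Cder_HH F F' G G' : Cder F F' -> Cder G G' ->
  Cder (HH F G) (HH (fun x => Cplus (Cmult Ci (F x)) (F' x)) (fun x => Cplus (Cmult (Cmult Ci (RtoC 2)) (G x)) (G' x))).
Proof.
  intros DF DG. eapply Cder_ext. 3: { apply Cder_plus; apply Cder_mult; [apply Cder_cis|exact DF|apply Cder_cis|exact DG]. }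
  intros; reflexivity. intros x; unfold HH, E1, E2; Ceq.
Qed.

Definition F0 x := AA 0 x.
Definition F1 x := Cmult Ci (Cplus (AA 0 x) (AA 1 x)).
Definition F2 x := Copp (Cplus (AA 0 x) (Cplus (Cmult (RtoC 2) (AA 1 x)) (AA 2 x))).
Definition F3 x := Copp (Cmult Ci (Cplus (AA 0 x) (Cplus (Cmult (RtoC 3) (AA 1 x)) (Cplus (Cmult (RtoC 3) (AA 2 x)) (AA 3 x))))).
Definition G0 x := BB 0 x.
Definition G1 x := Cmult Ci (Cplus (Cmult (RtoC 2) (BB 0 x)) (BB 1 x)).
Definition G2 x := Copp (Cplus (Cmult (RtoC 4) (BB 0 x)) (Cplus (Cmult (RtoC 4) (BB 1 x)) (BB 2 x))).
Definition G3 x := Copp (Cmult Ci (Cplus (Cmult (RtoC 8) (BB 0 x)) (Cplus (Cmult (RtoC 12) (BB 1 x)) (Cplus (Cmult (RtoC 6) (BB 2 x)) (BB 3 x))))).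



Lemma H_chain : Cder (HH F0 G0) (HH F1 G1) /\ Cder (HH F1 G1) (HH F2 G2) /\ Cder (HH F2 G2) (HH F3 G3).
Proof.
  destruct (AA_der 0 ltac:(lia)) as [A0 B0].
  destruct (AA_der 1 ltac:(lia)) as [A1 B1].
  destruct (AA_der 2 ltac:(lia)) as [A2 B2].
  split; [|split].
  { eapply Cder_ext; [intros; reflexivity| |apply Cder_HH; [exact A0|exact B0]].
    intros x; unfold HH, F1, G1, E1, E2; Ceq. }
  { eapply Cder_ext; [intros; reflexivity| |apply Cder_HH].
    2: { unfold F1. apply Cder_lin, Cder_plus; [exact A0|exact A1]. }
    2: { unfold G1. apply Cder_lin, Cder_plus; [apply Cder_lin; exact B0|exact B1]. }
    intros x; unfold HH, F1, G1, F2, G2, E1, E2; Ceq. }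
  { eapply Cder_ext; [intros; reflexivity| |apply Cder_HH].
    2: { unfold F2. eapply Cder_ext. 3: { apply (Cder_lin (RtoC (-1))), Cder_plus; [exact A0|apply Cder_plus; [apply (Cder_lin (RtoC 2)); exact A1|exact A2]]. }
         intros; Ceq. intros; reflexivity. }
    2: { unfold G2. eapply Cder_ext. 3: { apply (Cder_lin (RtoC (-1))), Cder_plus; [apply (Cder_lin (RtoC 4)); exact B0|apply Cder_plus; [apply (Cder_lin (RtoC 4)); exact B1|exact B2]]. }
         intros; Ceq. intros; reflexivity. }
    intros x; unfold HH, F2, G2, F3, G3, E1, E2; Ceq. }
Qed.

Lemma H_eq x : H t x = HH F0 G0 x.
Proof.
  unfold H, HH, F0, G0, AA, BB, alpha, beta, E1, E2, RS_P, RS_Q.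
  unfold Rdiv. rewrite RS_RP. simpl fst; simpl snd. rewrite Rmult_1_l, pow_O, Rmult_1_r. reflexivity.
Qed.

Definition N2 (z : C) := fst z ^ 2 + snd z ^ 2.
Definition W j x := Cmult (E1 x) (AA j x).
Definition V j x := Cmult (E2 x) (BB j x).

Lemma N2_mult a b : N2 (Cmult a b) = N2 a * N2 b.
Proof. unfold N2, Cmult; simpl. Rring. Qed.
Lemma N2_cis a : N2 (cis a) = 1.
Proof. unfold N2, cis; simpl. pose proof (sin2_cos2 a). unfold Rsqr in *. lra. Qed.

Lemma WV_norm j x : N2 (W j x) + N2 (V j x) = (N * u ^ j) ^ 2 * SS t j (x * u).
Proof.
  unfold W, V, E1, E2, AA, BB, SS. rewrite !N2_mult, !N2_cis, !Cmod2.
  unfold N2, RtoC; simpl. Rring.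
Qed.

Lemma u_val : 2 ^ t * u = / 1024.
Proof. unfold u, Tt. rewrite pow_add. field. apply pow_nonzero; lra. Qed.

Lemma WV0 x : N2 (W 0 x) + N2 (V 0 x) = 1.
Proof.
  rewrite WV_norm. destruct (RS_bound t (x * u)) as [E _]. rewrite E. replace ((N * u ^ 0) ^ 2 * 2 ^ (t + 1)) with (N * N * 2 ^ (t + 1)) by (simpl; ring). apply nrm_sq.
Qed.

Lemma WVj j x : (1 <= j <= 3)%nat -> N2 (W j x) + N2 (V j x) <= (/ 1024) ^ 2.
Proof.
  intros Hj. rewrite WV_norm. destruct (RS_bound t (x * u)) as [_ B]. specialize (B j ltac:(lia)).
  assert (Hu : 0 < u) by (unfold u, Tt; apply Rinv_0_lt_compat, pow_lt; lra).
  assert (0 < N) by apply nrm_pos.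
  eapply Rle_trans. { apply Rmult_le_compat_l; [apply pow2_ge_0|exact B]. }
  replace ((N * u ^ j) ^ 2 * (2 ^ (t + 1) * ((2 ^ t) ^ j) ^ 2)) with ((N * N * 2 ^ (t+1)) * ((2 ^ t * u) ^ j) ^ 2) by (rewrite Rpow_mult_distr; ring).
  assert (NN : N * N * 2 ^ (t+1) = 1) by apply nrm_sq. rewrite NN, u_val, Rmult_1_l.
  rewrite <- pow_mult. replace (j * 2)%nat with (2 + (j * 2 - 2))%nat by lia. rewrite pow_add.
  assert (Hk : forall k, 0 <= (/1024) ^ k <= 1) by (induction k; simpl; nra).
  destruct (Hk (j*2-2)%nat). assert (0 <= (/1024)^2) by apply pow2_ge_0. nra.
Qed.

Lemma Re_ids x :
  fst (HH F0 G0 x) = fst (W 0 x) + fst (V 0 x) /\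
  fst (HH F1 G1 x) = - snd (W 0 x) - snd (W 1 x) - 2 * snd (V 0 x) - snd (V 1 x) /\
  fst (HH F2 G2 x) = - (fst (W 0 x) + 2 * fst (W 1 x) + fst (W 2 x)) - (4 * fst (V 0 x) + 4 * fst (V 1 x) + fst (V 2 x)) /\
  fst (HH F3 G3 x) = snd (W 0 x) + 3 * snd (W 1 x) + 3 * snd (W 2 x) + snd (W 3 x) + 8 * snd (V 0 x) + 12 * snd (V 1 x) + 6 * snd (V 2 x) + snd (V 3 x).
Proof.
  unfold HH, F0, G0, F1, G1, F2, G2, F3, G3, W, V.
  repeat split; unfold Cplus, Cmult, Cminus, Copp, RtoC, Ci; simpl; Rring.
Qed.

Lemma main_t x : exists k : nat, (k <= 3)%nat /\ Rabs (Re (Cderive_n (H t) k x)) >= 1 / 4.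
Proof.
  assert (Hc : forall k, Cderive_n (H t) k x = Cderive_n (HH F0 G0) k x).
  { intros k; unfold Cderive_n. rewrite (Derive_n_ext (fun y => Re (H t y)) (fun y => Re (HH F0 G0 y))), 
      (Derive_n_ext (fun y => Im (H t y)) (fun y => Im (HH F0 G0 y))); auto; intros; rewrite H_eq; auto. }
  destruct H_chain as [D1 [D2 D3]].
  destruct (Cderive_chain _ _ _ _ D1 D2 D3 x) as [C0 [C1 [C2 C3]]].
  destruct (Re_ids x) as [R0 [R1 [R2 R3]]].
  destruct (Rlt_or_le (Rabs (Re (Cderive_n (H t) 0 x))) (1/4)) as [L0|L0]; [|exists 0%nat; split; [lia|lra]].
  destruct (Rlt_or_le (Rabs (Re (Cderive_n (H t) 1 x))) (1/4)) as [L1|L1]; [|exists 1%nat; split; [lia|lra]].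
  destruct (Rlt_or_le (Rabs (Re (Cderive_n (H t) 2 x))) (1/4)) as [L2|L2]; [|exists 2%nat; split; [lia|lra]].
  destruct (Rlt_or_le (Rabs (Re (Cderive_n (H t) 3 x))) (1/4)) as [L3|L3]; [|exists 3%nat; split; [lia|lra]].
  exfalso.
  rewrite Hc in L0, L1, L2, L3. rewrite C0 in L0. rewrite C1 in L1. rewrite C2 in L2. rewrite C3 in L3.
  unfold Re in *. rewrite R0 in L0. rewrite R1 in L1. rewrite R2 in L2. rewrite R3 in L3.
  assert (E := WV0 x). assert (E1' := WVj 1 x ltac:(lia)). assert (E2' := WVj 2 x ltac:(lia)). assert (E3' := WVj 3 x ltac:(lia)).
  unfold N2 in E, E1', E2', E3'.
  eapply (final_arith (fst (W 0 x)) (snd (W 0 x)) (fst (V 0 x)) (snd (V 0 x))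
     (fst (W 1 x)) (fst (W 2 x)) (fst (W 3 x)) (fst (V 1 x)) (fst (V 2 x)) (fst (V 3 x))
     (snd (W 1 x)) (snd (W 2 x)) (snd (W 3 x)) (snd (V 1 x)) (snd (V 2 x)) (snd (V 3 x))); try lra.
Qed.
End Main.

Theorem lemma3p5 (t : nat) (ht : Nat.Odd t) (x : R) :
  exists k : nat, (k <= 3)%nat /\ Rabs (Re (Cderive_n (H t) k x)) >= 1 / 4.
Proof. apply main_t. Qed.
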